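(* Call a finite union-closed collection of sets containing at least one non-empty set a counterexample if every element of its universe belongs to fewer than half of the sets of the collection. Let $\mathcal{A}$ be a separating, union-closed counterexample such that no counterexample has fewer sets than $\mathcal{A}$. Then $|\mathcal{A}|\ge 4m-1$, where $m=|U(\mathcal{A})|$.
   Context: A collection $\mathcal{A}$ of sets is union-closed if $S,T\in\mathcal{A}$ implies $S\cup T\in\mathcal{A}$. The universe $U(\mathcal{A})$ is $\bigcup_{A\in\mathcal{A}}A$. $\mathcal{A}$ is separating if for any two distinct elements of $U(\mathcal{A})$ there is a set in $\mathcal{A}$ containing one of them but not the other. *)

(* Defs.v *)
From mathcomp Require Import all_boot.
Set Implicit Arguments. Unset Strict Implicit. Unset Printing Implicit Defensive.

Section UC.
Variable T : finType.

Definition union_closed (A : {set {set T}}) : Prop :=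
  forall S S' : {set T}, S \in A -> S' \in A -> S :|: S' \in A.

Definition universe (A : {set {set T}}) : {set T} := \bigcup_(S in A) S.

Definition separating (A : {set {set T}}) : Prop :=
  forall x y : T, x \in universe A -> y \in universe A -> x != y ->
    exists2 S, S \in A & (x \in S) != (y \in S).

Definition freq (A : {set {set T}}) (x : T) : nat := #|[set S in A | x \in S]|.

Definition counterexample (A : {set {set T}}) : Prop :=
  [/\ union_closed A,
      exists2 S, S \in A & S != set0
    & forall x, x \in universe A -> 2 * freq A x < #|A| ].
End UC.

(* Main.v *)
Require Import Defs.
From mathcomp Require Import all_boot.
From mathcomp Require Import zify.
Set Implicit Arguments. Unset Strict Implicit.

Section Helpers.
Variable T : finType.
Variable A : {set {set T}}.
Hypothesis uc : union_closed A.

Lemma bigcup_in (P : pred {set T}) S0 :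
  S0 \in A -> P S0 -> \bigcup_(S in A | P S) S \in A.
Proof.
move=> S0A PS0.
have -> : \bigcup_(S in A | P S) S = S0 :|: \bigcup_(S in A | P S) S.
  apply/esym/setUidPr; apply: (bigcup_sup S0 (P:=fun S => (S \in A) && P S)); by rewrite S0A PS0.
apply: (big_ind (fun X => S0 :|: X \in A)).
- by rewrite setU0.
- move=> X Y HX HY.
  by rewrite -(setUid S0) setUACA; apply: uc.
- by move=> S /andP[SA _]; apply: uc.
Qed.

Lemma universe_in S0 : S0 \in A -> universe A \in A.
Proof. move=> S0A; rewrite /universe.
have -> : \bigcup_(S in A) S = \bigcup_(S in A | true) S by apply: eq_bigl => S; rewrite andbT.
exact: (@bigcup_in predT S0 S0A).
Qed.

Lemma in_universe x : reflect (exists2 S, S \in A & x \in S) (x \in universe A).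
Proof. exact: bigcupP. Qed.

Lemma card_split (P : pred {set T}) :
  #|[set S in A | P S]| + #|[set S in A | ~~ P S]| = #|A|.
Proof.
rewrite -(cardsID [set S | P S] A); congr (_ + _); apply: eq_card => S;
rewrite !inE //; by rewrite andbC.
Qed.

Lemma freq_lt y z : separating A -> y \in universe A -> z \in universe A -> y != z ->
  (forall S, S \in A -> y \in S -> z \in S) -> freq A y < freq A z.
Proof.
move=> sep yU zU yz H; apply: proper_card; apply/properP; split.
  by apply/subsetP => S; rewrite !inE => /andP[SA yS]; rewrite SA H.
have [S SA] := sep y z yU zU yz.
case yS: (y \in S) => /=; first by rewrite (H S SA yS).
move=> zS; exists S; rewrite !inE ?SA ?yS //=.
by move: zS; case: (z \in S).
Qed.

Definition Mz (z : T) := \bigcup_(S in A | z \notin S) S.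

Lemma Mz_inj : separating A -> {in universe A &, injective Mz}.
Proof.
move=> sep z w zU wU E; apply/eqP; apply/negPn/negP => zw.
have [S SA] := sep z w zU wU zw.
have key : forall a b, a \in S -> b \notin S -> Mz a = Mz b -> False.
  move=> a b aS bS Eab.
  have : a \in Mz b.
    apply: (subsetP (bigcup_sup S (P := fun S => (S \in A) && (b \notin S)) _)) => //.
    by rewrite SA.
  by rewrite -Eab => /bigcupP[S' /andP[_ aS']]; rewrite (negbTE aS').
case zS: (z \in S); case wS: (w \in S) => // _.
- by apply: (key z w) => //; rewrite wS.
- by apply: (key w z) => //; rewrite zS.
Qed.

End Helpers.

Lemma arith_key : forall n fx b fb fy a v u : nat, b + fx = n -> 2*fx < n -> b <= 2*fb ->
  fy = a + fb -> 2*fy < n -> v+1 <= a -> v+2 = u -> 4*u <= n+1.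
Proof. move=> *; lia. Qed.

Theorem theorem1 (T : finType) (A : {set {set T}}) :
  separating A -> counterexample A ->
  (forall (T' : finType) (B : {set {set T'}}), counterexample B -> #|A| <= #|B|) ->
  4 * #|universe A| <= #|A| + 1.
Proof.
move=> sep [uc [S0 S0A S0n] cex] minA.
set U := universe A.
have UA : U \in A := universe_in uc S0A.
have [x0 x0S0] := set0Pn _ S0n.
have x0U : x0 \in U by apply/in_universe; exists S0.
have := @arg_maxnP _ x0 (fun i => i \in U) (freq A) x0U.
case => x xU xmax.
have hx : forall z, z \in U -> z != x -> exists2 S, S \in A & (x \in S) && (z \notin S).
  move=> z zU zx.
  case: (boolP [exists S in A, (x \in S) && (z \notin S)]).
    by move=> /exists_inP[S SA HS]; exists S.
  move=> /exists_inPn H.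
  have := freq_lt sep xU zU (negbT (introF eqP (fun e => (negP zx) (introT eqP (esym e))))).
  move=> /(_ _) lt; exfalso.
  have : freq A x < freq A z.
    apply: lt => S SA xS; move: (H S SA); rewrite xS /=; by move/negPn.
  by move: (xmax z zU); rewrite /geq /= leqNgt => /negP.
set B := [set S in A | x \notin S].
have ucB : union_closed B.
  move=> S S'; rewrite !inE => /andP[SA xS] /andP[S'A xS'].
  by rewrite uc // negb_or xS xS'.
have cardB : #|B| + freq A x = #|A|.
  by rewrite addnC /freq /B (@card_split _ A (fun S => x \in S)).
have fx1 : 0 < freq A x.
  move/in_universe: xU => [S SA xS]; apply/card_gt0P; exists S; by rewrite inE SA xS.
have cx := cex x xU.
have [Sb SbB Sbn] : exists2 S, S \in B & S != set0.
  case: (boolP [exists S in B, S != set0]).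
    by move=> /exists_inP[S SB HS]; exists S.
  move=> /exists_inPn H; exfalso.
  have : #|B| <= 1.
    have : B \subset [set set0] by apply/subsetP => S SB; rewrite inE; move: (H S SB); by move/negPn.
    by move/subset_leq_card; rewrite cards1.
  lia.
have [y0 /andP[y0U y0h]] : exists y, (y \in universe B) && (#|B| <= 2 * freq B y).
  case: (boolP [exists y, (y \in universe B) && ~~ (2 * freq B y < #|B|)]).
    by move=> /existsP[y /andP[yU yh]]; exists y; rewrite yU leqNgt.
  move=> /existsPn H; exfalso.
  have cB : counterexample B.
    split => //; first by exists Sb.
    move=> y yU; move: (H y); by rewrite yU /= negbK.
  have := minA _ B cB; lia.
have := @arg_maxnP _ y0 (fun y => (y \in universe B) && (#|B| <= 2 * freq B y)) (freq A) (introT andP (conj y0U y0h)).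
case => y /andP[yUB yh] ymax.
have BA : B \subset A by apply/subsetP => S; rewrite inE => /andP[].
have yU : y \in U.
  move/in_universe: yUB => [S SB yS]; apply/in_universe; exists S => //; exact: (subsetP BA).
have xy : x != y.
  apply/eqP => exy; move/in_universe: yUB => [S]; rewrite inE => /andP[_ xS].
  by rewrite -exy (negbTE xS).
have hy : forall z, z \in U -> z != y -> exists2 S, S \in A & (y \in S) && (z \notin S).
  move=> z zU zy.
  case: (boolP [exists S in A, (y \in S) && (z \notin S)]).
    by move=> /exists_inP[S SA HS]; exists S.
  move=> /exists_inPn H; exfalso.
  have Hyz : forall S, S \in A -> y \in S -> z \in S.
    move=> S SA yS; move: (H S SA); rewrite yS /=; by move/negPn.
  have lt : freq A y < freq A z.
    apply: freq_lt => //; by rewrite eq_sym.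
  have zUB : z \in universe B.
    move/in_universe: yUB => [S SB yS]; apply/in_universe; exists S => //.
    apply: Hyz => //; exact: (subsetP BA).
  have le : freq B y <= freq B z.
    apply: subset_leq_card; apply/subsetP => S; rewrite !inE => /andP[/andP[SA xS] yS].
    by rewrite SA xS Hyz.
  have : #|B| <= 2 * freq B z by apply: (leq_trans yh); rewrite leq_mul2l le orbT.
  move=> hz; have := ymax z; rewrite zUB hz => /(_ isT).
  by rewrite /geq /= leqNgt lt.
set a := #|[set S in A | (x \in S) && (y \in S)]|.
have fy : freq A y = a + freq B y.
  rewrite /freq -(@card_split _ [set S in A | y \in S] (fun S => x \in S)).
  congr (_ + _); apply: eq_card => S; rewrite !inE.
    by case: (S \in A); case: (x \in S); case: (y \in S).
  by case: (S \in A); case: (x \in S); case: (y \in S).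
have cy := cex y yU.
set V := U :\: [set x; y].
have cardV : #|V| + 2 = #|U|.
  rewrite /V cardsD.
  have -> : U :&: [set x; y] = [set x; y].
    apply/setIidPr; apply/subsetP => z; rewrite !inE => /orP[] /eqP ->//.
  rewrite cards2 xy.
  have : [set x; y] \subset U by apply/subsetP => z; rewrite !inE => /orP[] /eqP ->//.
  move/subset_leq_card; rewrite cards2 xy => h; exact: subnK.
have MzV : {subset (Mz A) @: V <= [set S in A | (x \in S) && (y \in S)] :\ U}.
  move=> S /imsetP[z zV ->]; move: zV; rewrite !inE negb_or => /andP[/andP[zx zy] zU].
  have [Sx SxA /andP[xSx zSx]] := hx z zU zx.
  have [Sy SyA /andP[ySy zSy]] := hy z zU zy.
  have sub : forall S', S' \in A -> z \notin S' -> S' \subset Mz A z.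
    move=> S' S'A zS'; apply: (bigcup_sup S' (P := fun S => (S \in A) && (z \notin S))); by rewrite S'A.
  have MA : Mz A z \in A by exact: (bigcup_in uc (P := fun S => z \notin S) SxA zSx).
  rewrite MA (subsetP (sub Sx SxA zSx)) // (subsetP (sub Sy SyA zSy)) // !andbT.
  apply/eqP => E; move: zU; rewrite -/U -E => /bigcupP[S' /andP[_ zS'] zS''].
  by rewrite zS'' in zS'.
have cardIm : #|(Mz A) @: V| = #|V|.
  apply: card_in_imset; apply: sub_in2 (Mz_inj sep) => z; rewrite inE => /andP[_ zU]; exact: zU.
have aV : #|V| + 1 <= a.
  have UX : U \in [set S in A | x \in S & y \in S] by rewrite inE UA xU yU.
  rewrite -cardIm /a (cardsD1 U [set S in A | x \in S & y \in S]) UX.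
  rewrite addnC add1n ltnS; apply: subset_leq_card; apply/subsetP; exact: MzV.
apply: (arith_key cardB cx yh fy cy aV cardV).
Qed.
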